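(* The map $\Phi:\mathcal{C}\to\bar{\mathbf K}$, $C\mapsto K_C$, is a bijection, and its inverse is given by $\Phi^{-1}(K)=C_K$ for all $K\in\bar{\mathbf K}$.
   Context: Let $\mathcal{X}$ be a nonempty set and let $\mathscr{V}$ be the real vector space of all functions $u:\mathcal{X}\to\mathbb{R}$ (options), with pointwise operations. For $u,v\in\mathscr{V}$, $u\le v$ iff $u(x)\le v(x)$ for all $x\in\mathcal{X}$, and $u<v$ iff $u\le v$ and $u\neq v$. Let $\mathscr{V}_{>0}=\{u\in\mathscr{V}:0<u\}$ and $\mathscr{V}^s_{>0}=\{\{u\}:u\in\mathscr{V}_{>0}\}$. Let $\mathscr{Q}$ be the set of all finite subsets of $\mathscr{V}$ (including $\emptyset$). For $A\in\mathscr{Q}$ and $u\in\mathscr{V}$, $A-u=\{v-u:v\in A\}$. For a positive integer $n$, $\mathbb{R}^{n,+}=\{\boldsymbol\lambda\in\mathbb{R}^n:\lambda_j\ge0\ \forall j,\ \sum_j\lambda_j>0\}$, and for $\boldsymbol\lambda\in\mathbb{R}^n$, $\mathbf u=(u_1,\dots,u_n)\in\mathscr{V}^n$, $\boldsymbol\lambda\mathbf u=\sum_{j=1}^n\lambda_ju_j$. A choice function is a map $C:\mathscr{Q}\to\mathscr{Q}$ with $C(A)\subseteq A$ for all $A$; its rejection function is $R_C(A)=A\setminus C(A)$, and $K_C=\{A\in\mathscr{Q}:0\notin C(A\cup\{0\})\}$. $C$ is coherent if: (C0) $C(A)\neq\emptyset$ for all nonempty $A\in\mathscr{Q}$; (C1)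 for all $A\in\mathscr{Q}$ and $u\in A$: $u\in C(A)\iff 0\in C(A-u)$; (C2) $\{u\}\in K_C$ for all $u\in\mathscr{V}_{>0}$; (C3) for all $A,B\in K_C$ and all maps $\boldsymbol\lambda:A\times B\to\mathbb{R}^{2,+}$, $\{\boldsymbol\lambda(\mathbf u)\mathbf u:\mathbf u\in A\times B\}\in K_C$; (C4) $A\subseteq B\Rightarrow R_C(A)\subseteq R_C(B)$ for all $A,B\in\mathscr{Q}$. $\mathcal{C}$ denotes the set of coherent choice functions. A set of desirable option sets is any $K\subseteq\mathscr{Q}$. It is coherent if for all $A,B\in K$: (K0) $A\setminus\{0\}\in K$; (K1) $\{0\}\notin K$; (K2) $\mathscr{V}^s_{>0}\subseteq K$; (K3) $\{\boldsymbol\lambda(\mathbf u)\mathbf u:\mathbf u\in A\times B\}\in K$ for every map $\boldsymbol\lambda:A\times B\to\mathbb{R}^{2,+}$; (K4) $A\cup Q\in K$ for all $Q\in\mathscr{Q}$. $\bar{\mathbf K}$ denotes the set of coherent sets of desirable option sets. For $K\subseteq\mathscr{Q}$, the choice function $C_K$ is defined by $C_K(A)=\{u\in A:(A-u)\setminus\{0\}\notin K\}$ for all $A\in\mathscr{Q}$. *)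

(* Defs.v *)
From HB Require Import structures.
From mathcomp Require Import all_boot all_order all_algebra.
From mathcomp Require Import finmap boolp reals.
Set Implicit Arguments. Unset Strict Implicit. Unset Printing Implicit Defensive.
Import Order.TTheory GRing.Theory Num.Theory.
Local Open Scope ring_scope.
Local Open Scope fset_scope.

Section Defs.
Variables (R : realType) (X : Type).

Definition opt := (X -> R).
Definition zero_opt : opt := fun _ => 0%R.

Definition Qset := {fset opt}.

Definition opt_le (u v : opt) : Prop := forall x, (u x <= v x)%R.
Definition opt_lt (u v : opt) : Prop := opt_le u v /\ u <> v.
Definition Vpos (u : opt) : Prop := opt_lt zero_opt u.

Definition shift (A : Qset) (u : opt) : Qset :=
  [fset (fun x => (v x - u x)%R) | v in A].

Definition pos2 (l : R * R) : Prop := (0 <= fst l)%R /\ (0 <= snd l)%R /\ (0 < fst l + snd l)%R.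

Definition combos (A B : Qset) (lam : opt -> opt -> R * R) : Qset :=
  [fset (fun x => (fst (lam u v) * u x + snd (lam u v) * v x)%R) | u in A, v in B].

Definition choice_fun (C : Qset -> Qset) : Prop := forall A, C A `<=` A.

Definition rej (C : Qset -> Qset) (A : Qset) : Qset := A `\` C A.

Definition K_of (C : Qset -> Qset) : Qset -> Prop :=
  fun A => zero_opt \notin C (zero_opt |` A).

Definition coherent_C (C : Qset -> Qset) : Prop :=
  choice_fun C /\
  (forall A : Qset, A != fset0 -> C A != fset0) /\
  (forall (A : Qset) (u : opt), u \in A ->
              (u \in C A <-> zero_opt \in C (shift A u))) /\
  (forall u, Vpos u -> K_of C [fset u]) /\
  (forall A B lam, K_of C A -> K_of C B ->
              (forall u v, u \in A -> v \in B -> pos2 (lam u v)) ->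
              K_of C (combos A B lam)) /\
  (forall A B : Qset, A `<=` B -> rej C A `<=` rej C B).

Definition coherent_K (K : Qset -> Prop) : Prop :=
  (forall A, K A -> K (A `\ zero_opt)) /\
  ~ K [fset zero_opt] /\
  (forall u, Vpos u -> K [fset u]) /\
  (forall A B lam, K A -> K B ->
              (forall u v, u \in A -> v \in B -> pos2 (lam u v)) ->
              K (combos A B lam)) /\
  (forall A Q, K A -> K (A `|` Q)).

Definition C_of (K : Qset -> Prop) : Qset -> Qset :=
  fun A => [fset u in A | `[< ~ K (shift A u `\ zero_opt) >]].

End Defs.

(* Main.v *)
Require Import Defs.
From HB Require Import structures.
From mathcomp Require Import all_boot all_order all_algebra.
From mathcomp Require Import finmap boolp reals.
From mathcomp Require Import ring.
Set Implicit Arguments. Unset Strict Implicit. Unset Printing Implicit Defensive.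
Import Order.TTheory GRing.Theory Num.Theory.
Local Open Scope ring_scope.
Local Open Scope fset_scope.

Section S.
Variables (R : realType) (X : Type).
Local Notation Q := (Qset R X).
Local Notation z := (@zero_opt R X).

Lemma shiftP (A : Q) u a : reflect (exists2 v, v \in A & a = (fun x => v x - u x)) (a \in shift A u).
Proof. rewrite /shift; apply: (iffP (imfsetP _ _ _ _)) => -[v Hv ->]; by exists v. Qed.

Lemma sub_eq0 (v u : opt R X) : ((fun x => v x - u x) == z) = (v == u).
Proof.
apply/eqP/eqP => [h|->]; last by apply: funext => x; rewrite subrr.
by apply: funext => x; apply/eqP; rewrite -subr_eq0; have := congr1 (fun f => f x) h => /= ->.
Qed.

Lemma shift0 (A : Q) : shift A z = A.
Proof.
apply/fsetP => a; apply/shiftP/idP => [[v Hv ->]|Ha].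
  by have -> : (fun x => v x - z x) = v by apply: funext => x; rewrite /zero_opt subr0.
by exists a => //; apply: funext => x; rewrite /zero_opt subr0.
Qed.

Lemma z_in_shift (A : Q) u : u \in A -> z \in shift A u.
Proof. move=> Hu; apply/shiftP; exists u => //; apply: funext => x; by rewrite subrr. Qed.

Variable K : Q -> Prop.
Hypothesis HK : coherent_K K.

Lemma subK (D E : Q) : D `<=` E -> K D -> K E.
Proof. move=> /fsetUidPr <- HD; by case: HK => _ [_ [_ [_ H4]]]; apply: H4. Qed.

Lemma subK0 (D E : Q) : D `\ z `<=` E -> K D -> K E.
Proof. move=> S HD; apply: (subK S); by case: HK => H0 _; apply: H0. Qed.

Lemma K_neq0 (D : Q) : K D -> D != fset0.
Proof.
move=> HD; apply/negP => /eqP E; subst D.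
case: HK => _ [H1 _]; apply: H1; apply: subK HD; exact: fsub0set.
Qed.

Lemma KCK : K_of (C_of K) = K.
Proof.
apply: funext => A; apply: propext.
have E : (z |` A) `\ z = A `\ z.
  by apply/fsetP => a; rewrite !inE; case: (a == z).
have Hm : (z \in C_of K (z |` A)) = `[< ~ K (A `\ z) >].
  by rewrite /C_of !inE eqxx /= shift0 E.
rewrite /K_of Hm; split.
- move=> H; apply: contrapT => nK; apply/negP: H; rewrite negbK.
  by apply/asboolP => HK'; apply: nK; apply: subK HK'; apply: fsubD1set.
- move=> HA; apply/negP => /asboolP; apply.
  by case: HK => H0 _; apply: H0.
Qed.

Lemma elimK (S : Q) u w : K (shift S u `\ z) -> K (shift S w `\ z) ->
  K (shift (S `\ w) u `\ z).
Proof.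
move=> Hu Hw.
pose lam := fun (a b : opt R X) =>
  (if a == (fun x => w x - u x) then (1,1) else (1,0)) : R * R.
have Hc : K (combos (shift S u `\ z) (shift S w `\ z) lam).
  case: HK => _ [_ [_ [H3 _]]]; apply: H3 => // a b _ _.
  rewrite /lam /pos2; case: ifP => _ /=; rewrite ?ler01 ?ltr01 ?addr0 //.
  by rewrite ltr_wpDl.
apply: (subK0 _ Hc); apply/fsubsetP => c; rewrite in_fsetD1 => /andP[cn0 /(imfset2P _ _ _ _ _)[a Ha [b Hb Ec]]].
move: Ha Hb; rewrite !in_fsetD1 => /andP[an0 /shiftP[v Hv Ea]] /andP[bn0 /shiftP[v' Hv' Eb]].
subst a b c.
rewrite cn0 /=; apply/shiftP; rewrite /lam; case: eqP => [Ea|Na] /=.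
- exists v'.
    by rewrite in_fsetD1 Hv' andbT; rewrite sub_eq0 in bn0.
  apply: funext => x; have := congr1 (fun f => f x) Ea => /= ->; ring.
- exists v.
    rewrite in_fsetD1 Hv andbT; apply/eqP => E; apply: Na; by rewrite E.
  by apply: funext => x; rewrite mul1r mul0r addr0.
Qed.

Lemma C0_K n : forall (S : Q), (#|` S| <= n)%N -> S != fset0 ->
  (forall u, u \in S -> K (shift S u `\ z)) -> False.
Proof.
elim: n => [|n IH] S.
  by rewrite leqn0 cardfs_eq0 => /eqP ->; rewrite eqxx.
move=> Hn /fset0Pn[u Hu] Hall.
have := K_neq0 (Hall u Hu) => /fset0Pn[t]; rewrite in_fsetD1 => /andP[tn0 /shiftP[w Hw Et]].
subst t; rewrite sub_eq0 in tn0.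
apply: (IH (S `\ w)).
- by move: Hn; rewrite (cardfsD1 w S) Hw add1n ltnS.
- by apply/fset0Pn; exists u; rewrite in_fsetD1 Hu andbT eq_sym.
- move=> x; rewrite in_fsetD1 => /andP[_ Hx]; apply: elimK; exact: Hall.
Qed.
End S.

Section T.
Variables (R : realType) (X : Type).
Local Notation Q := (Qset R X).
Local Notation z := (@zero_opt R X).

Lemma inC (K : Q -> Prop) A u :
  (u \in C_of K A) = (u \in A) && `[< ~ K (shift A u `\ z) >].
Proof. by rewrite /C_of !inE. Qed.

Lemma KofC (C : Q -> Q) : coherent_C C -> coherent_K (K_of C).
Proof.
move=> [Hch [H0 [H1 [H2 [H3 H4]]]]].
split; [|split; [|split; [|split]]].
- move=> A; rewrite /K_of.
  have -> // : z |` (A `\ z) = z |` A.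
  by apply/fsetP => a; rewrite !inE; case: (a == z).
- rewrite /K_of fsetUid => H.
  have /fset0Pn[x Hx] : C [fset z] != fset0.
    by apply: H0; apply/fset0Pn; exists z; rewrite inE.
  have := fsubsetP (Hch _) x Hx; rewrite inE => /eqP Ex; subst x.
  by rewrite Hx in H.
- exact: H2.
- exact: H3.
- move=> A Q' HA; rewrite /K_of.
  have : z \in rej C (z |` A) by rewrite /rej in_fsetD HA fsetU11.
  have sub : z |` A `<=` z |` (A `|` Q') by apply: fsetUS; apply: fsubsetUl.
  by move/(fsubsetP (H4 _ _ sub)); rewrite /rej in_fsetD => /andP[].
Qed.

Lemma CKC (C : Q -> Q) : coherent_C C -> C_of (K_of C) = C.
Proof.
move=> [Hch [H0 [H1 _]]].
apply: funext => A; apply/fsetP => u; rewrite inC.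
case Hu: (u \in A) => /=; last first.
  by symmetry; apply/negbTE/negP => /(fsubsetP (Hch A)); rewrite Hu.
rewrite /K_of fsetD1K ?(z_in_shift Hu) //.
apply/asboolP/idP.
- move=> nn; apply/(H1 _ _ Hu); apply: contrapT => h; apply: nn; exact/negP.
- by move=> Hc; move/negP; apply; apply/(H1 _ _ Hu).
Qed.

Lemma CofK (K : Q -> Prop) : coherent_K K -> coherent_C (C_of K).
Proof.
move=> HK; have E := KCK HK.
have HK' := HK; case: HK' => H0 [H1 [H2 [H3 H4]]].
split; [|split; [|split; [|split; [|split]]]].
- by move=> A; apply/fsubsetP => u; rewrite inC => /andP[].
- move=> A HA; apply/negP => /eqP HE.
  apply: (@C0_K _ _ K HK #|` A| A (leqnn _) HA) => u Hu.
  have : u \notin C_of K A by rewrite HE inE.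
  by rewrite inC Hu /= => /asboolPn; apply: contrapT.
- move=> A u Hu; rewrite !inC Hu (z_in_shift Hu) /= shift0; split; by [].
- by rewrite E.
- by rewrite E.
- move=> A B sAB; apply/fsubsetP => u; rewrite /rej !in_fsetD !inC => /andP[h Hu].
  rewrite Hu /= in h; rewrite (fsubsetP sAB _ Hu) andbT /=.
  apply/asboolPn => nK; apply: nK; move/asboolPn: h => /contrapT h.
  apply: (subK HK _ h); apply/fsubsetP => a; rewrite !in_fsetD1 => /andP[-> /shiftP[v Hv ->]].
  by apply/shiftP; exists v => //; apply: (fsubsetP sAB).
Qed.
End T.

Theorem theorem2 (R : realType) (X : Type) (hX : inhabited X) :
  (forall C : Qset R X -> Qset R X, coherent_C C -> coherent_K (K_of C)) /\
  (forall K : Qset R X -> Prop, coherent_K K -> coherent_C (C_of K)) /\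
  (forall C : Qset R X -> Qset R X, coherent_C C -> C_of (K_of C) = C) /\
  (forall K : Qset R X -> Prop, coherent_K K -> K_of (C_of K) = K).
Proof.
split; [exact: KofC|split; [exact: CofK|split; [exact: CKC|]]].
move=> K HK; exact: KCK.
Qed.
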